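(* Let $q$ be a prime power and let $d+1$ be a divisor of $q-1$. A $(d+1)$-divisible Dembowski–Ostrom polynomial $f\in\mathbb{F}_q[x]$ is differentially $d$-uniform if and only if $f$ is almost-$(d+1)$-to-1.
   Context: A polynomial $f\in\mathbb{F}_q[x]$, $q=p^n$, is Dembowski–Ostrom (DO) if it can be written as $\sum_{i,j=0}^{n-1}a_{ij}x^{p^i+p^j}$ when $q$ is odd, and as $\sum_{i\neq j}a_{ij}x^{2^i+2^j}$ when $q$ is even. For a divisor $k$ of $q-1$, $f$ is $k$-divisible if $f(x)=f'(x^k)$ for some map $f'$. $f$ is differentially $d$-uniform if $d=\max_{a\neq 0,\,b}|\{x: f(x+a)-f(x)=b\}|$. $f$ is almost-$k$-to-1 if there is a unique element of $\mathrm{Im}(f)$ with exactly one preimage and every other element of $\mathrm{Im}(f)$ has exactly $k$ preimages. *)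

(* Defs.v *)
From HB Require Import structures.
From mathcomp Require Import all_boot all_order all_algebra.
Set Implicit Arguments. Unset Strict Implicit. Unset Printing Implicit Defensive.
Import GRing.Theory.
Local Open Scope ring_scope.

Definition DO_poly (F : fieldType) (p n : nat) (f : {poly F}) : Prop :=
  exists a : 'I_n -> 'I_n -> F,
    if odd (p ^ n) then
      f = \sum_(i < n) \sum_(j < n) a i j *: 'X^(p ^ i + p ^ j)
    else
      f = \sum_(i < n) \sum_(j < n | i != j) a i j *: 'X^(p ^ i + p ^ j).

Definition k_divisible (F : fieldType) (k : nat) (f : F -> F) : Prop :=
  exists f' : F -> F, forall x, f x = f' (x ^+ k).

Definition diff_count (F : finFieldType) (f : F -> F) (a b : F) : nat :=
  #|[set x : F | f (x + a) - f x == b]|.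

Definition diff_uniform (F : finFieldType) (f : F -> F) (d : nat) : Prop :=
  \max_(a : F | a != 0 :> F) \max_(b : F) diff_count f a b = d.

Definition npreim (F : finFieldType) (f : F -> F) (y : F) : nat :=
  #|[set x : F | f x == y]|.

Definition almost_k_to_1 (F : finFieldType) (k : nat) (f : F -> F) : Prop :=
  exists y0 : F,
    [/\ npreim f y0 = 1%N,
        (forall y, npreim f y = 1%N -> y = y0) &
        (forall y, (exists x, f x = y) -> y != y0 -> npreim f y = k)].

(* Main.v *)
Require Import Defs.
From mathcomp Require Import all_boot all_order all_algebra.
From mathcomp Require Import all_field all_solvable.
From mathcomp Require Import ring.
Set Implicit Arguments. Unset Strict Implicit. Unset Printing Implicit Defensive.
Import GRing.Theory.
Local Open Scope ring_scope.

Section S.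
Variable F : finFieldType.

Definition E3 (g : {poly F}) (x y a : F) :=
  g.[x+y+a] - g.[x+y] - g.[x+a] + g.[x] - g.[y+a] + g.[y] + g.[a] - g.[0].

Lemma E3D u v x y a : E3 (u + v) x y a = E3 u x y a + E3 v x y a.
Proof. rewrite /E3 !hornerD; ring. Qed.
Lemma E3Z c u x y a : E3 (c *: u) x y a = c * E3 u x y a.
Proof. rewrite /E3 !hornerZ; ring. Qed.
Lemma E30 x y a : E3 0 x y a = 0.
Proof. rewrite /E3 !horner0; ring. Qed.

Lemma E3_mono p i j x y a : p \in [pchar F] ->
  E3 'X^(p ^ i + p ^ j) x y a = 0.
Proof.
move=> hp.
have Dn m : forall u v : F, (u + v) ^+ (p ^ m) = u ^+ (p ^ m) + v ^+ (p ^ m).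
  move=> u v; apply: exprDn_pchar.
  rewrite (eq_pnat _ (pcharf_eq hp)) pnatX pnat_id ?orTb //; exact: (pcharf_prime hp).
rewrite /E3 !hornerXn !exprD !Dn !expr0n !expn_eq0 (_ : (p == 0)%N = false); last by move: (pcharf_prime hp); case: (p).
rewrite /= mulr0 subr0.
move: (x ^+ (p ^ i)) (y ^+ (p ^ i)) (a ^+ (p ^ i)) (x ^+ (p ^ j)) (y ^+ (p ^ j)) (a ^+ (p ^ j)).
move=> *; ring.
Qed.

Lemma E3_sum (I : finType) (P : pred I) (c : I -> F) (g : I -> {poly F}) x y a :
  (forall i, E3 (g i) x y a = 0) -> E3 (\sum_(i | P i) c i *: g i) x y a = 0.
Proof.
move=> H; apply: (big_ind (fun h => E3 h x y a = 0)).
- exact: E30.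
- by move=> u v hu hv; rewrite E3D hu hv addr0.
- by move=> i _; rewrite E3Z H mulr0.
Qed.


Lemma E3_sumg (I : finType) (P : pred I) (g : I -> {poly F}) x y a :
  (forall i, E3 (g i) x y a = 0) -> E3 (\sum_(i | P i) g i) x y a = 0.
Proof.
move=> H; apply: (big_ind (fun h => E3 h x y a = 0)).
- exact: E30.
- by move=> u v hu hv; rewrite E3D hu hv addr0.
- by move=> i _; rewrite H.
Qed.

Lemma DO_E3 p n (f : {poly F}) : prime p -> #|F| = (p ^ n)%N -> DO_poly p n f ->
  forall x y a, E3 f x y a = 0.
Proof.
move=> hp hc [c hf] x y a.
have hch := card_finPcharP hc hp.
case: (odd _) in hf; rewrite hf; apply: E3_sumg => i; apply: E3_sum => j;
  exact: E3_mono.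
Qed.

Lemma prim_root_ex k : (0 < k)%N -> (k %| #|F|.-1)%N -> exists w : F, k.-primitive_root w.
Proof.
move=> k0 kd.
pose rs := [seq x <- enum F | x != 0].
have q1 : (0 < #|F|.-1)%N.
  by rewrite -subn1 subn_gt0 (finNzRing_gt1 F).
have : has (#|F|.-1).-primitive_root rs.
  apply: has_prim_root => //.
  - apply/allP => x; rewrite mem_filter => /andP[nz _].
    rewrite unity_rootE; apply/eqP.
    apply: (mulIf nz); rewrite -exprSr prednK ?expf_card ?mul1r //.
    by apply/card_gt0P; exists 0.
  - by rewrite filter_uniq ?enum_uniq.
  - rewrite size_filter.
    have := count_predC (fun x : F => x != 0) (enum F).
    have -> : count (predC (fun x : F => x != 0)) (enum F) = count (pred1 0) (enum F).
      by apply: eq_count => z; rewrite /= negbK.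
    rewrite count_uniq_mem ?enum_uniq // mem_enum -cardT addn1 => <-.
    by rewrite /=.
  - case/hasP => z _ hz; exists (z ^+ (#|F|.-1 %/ k)).
    exact: dvdn_prim_root.
Qed.

Lemma card_mu k (w : F) : (0 < k)%N -> k.-primitive_root w ->
  #|[set z : F | z ^+ k == 1]| = k.
Proof.
move=> k0 pw.
have -> : [set z : F | z ^+ k == 1] = [set w ^+ (val i) | i : 'I_k].
  apply/setP => z; rewrite inE; apply/eqP/imsetP.
  - by move=> /(prim_rootP pw) [i ->]; exists i.
  - by case=> i _ ->; rewrite exprAC (prim_expr_order pw) expr1n.
rewrite card_imset ?card_ord // => i j /eqP.
by rewrite (eq_prim_root_expr pw) !modn_small ?ltn_ord // => /eqP/val_inj.
Qed.

Section Main.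
Variable g : F -> F.
Variable d : nat.
Hypothesis hE : forall x y a,
  g (x+y+a) - g (x+y) - g (x+a) + g x - g (y+a) + g y + g a - g 0 = 0.
Hypothesis hkd : forall z x, z ^+ d.+1 = 1 -> g (z * x) = g x.
Variable w : F.
Hypothesis hw : d.+1.-primitive_root w.
Hypothesis hd : (0 < d)%N.

Let mu := [set z : F | z ^+ d.+1 == 1].
Let mu1 := mu :\ 1.
Let sol a b := [set x : F | g (x + a) - g x == b].
Let S a := [set a / (z - 1) | z in mu1].

Lemma w_neq1 : w != 1.
Proof.
apply/negP => /eqP w1.
have := eq_prim_root_expr hw 1 0.
rewrite expr1 expr0 w1 eqxx modn_small // mod0n.
Qed.

Lemma w_mu : w \in mu.
Proof. by rewrite inE (prim_expr_order hw). Qed.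

Lemma card_mu1 : #|mu1| = d.
Proof.
have hm : #|mu| = d.+1 := card_mu (ltn0Sn d) hw.
have h1 : (1 : F) \in mu by rewrite inE expr1n.
by move: hm; rewrite (cardsD1 1 mu) h1 add1n => -[].
Qed.

Lemma Ssub a : a != 0 -> S a \subset sol a 0.
Proof.
move=> a0; apply/subsetP => x /imsetP [z]; rewrite !inE => /andP [z1 zk] ->.
have z10 : z - 1 != 0 by rewrite subr_eq0.
have -> : a / (z - 1) + a = z * (a / (z - 1)).
  by field.
by rewrite hkd ?subrr // (eqP zk).
Qed.

Lemma cardS a : a != 0 -> #|S a| = d.
Proof.
move=> a0; rewrite card_in_imset ?card_mu1 // => z1 z2; rewrite !inE.
move=> /andP [h1 _] /andP [h2 _] e.
have e' : (z1 - 1)^-1 = (z2 - 1)^-1 by apply: (mulfI a0).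
by move/invr_inj: e' => /addIr.
Qed.

Lemma trans_sol a b c x0 x1 : x0 \in sol a b -> x1 \in sol a c ->
  (#|sol a b| <= #|sol a c|)%N.
Proof.
pose D x := g (x + a) - g x.
have hD : forall x y, D (x + y) = D x + D y - D 0.
  move=> x y; rewrite /D add0r; apply/eqP; rewrite -subr_eq0; apply/eqP.
  transitivity (g (x+y+a) - g (x+y) - g (x+a) + g x - g (y+a) + g y + g a - g 0);
    [ring | exact: hE].
rewrite !inE => /eqP h0 /eqP h1.
rewrite -(card_imset _ (addIr (x1 - x0))).
apply: subset_leq_card; apply/subsetP => z /imsetP [x]; rewrite !inE => /eqP hx ->.
apply/eqP; rewrite -/(D _) hD.
have e1 : D x1 = D x0 + D (x1 - x0) - D 0.
  by rewrite -hD addrC subrK.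
rewrite /D in e1 h0 h1 hx *.
rewrite hx; rewrite -h1 e1 h0; ring.
Qed.


Lemma fib_mu x : x != 0 -> [set z * x | z in mu] \subset [set y | g y == g x].
Proof.
move=> _; apply/subsetP => y /imsetP [z]; rewrite !inE => /eqP zk ->.
by rewrite hkd.
Qed.

Lemma card_fib_mu x : x != 0 -> #|[set z * x | z in mu]| = d.+1.
Proof.
move=> x0; rewrite card_imset ?(card_mu (ltn0Sn d) hw) //.
exact: mulIf.
Qed.

Lemma wx_neq x : x != 0 -> w * x != x.
Proof.
move=> x0; apply/negP => /eqP e.
have : (w - 1) * x = 0 by rewrite mulrBl e mul1r subrr.
by move/eqP; rewrite mulf_eq0 subr_eq0 (negbTE w_neq1) (negbTE x0).
Qed.

Lemma dir1 : diff_uniform g d -> almost_k_to_1 d.+1 g.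
Proof.
rewrite /diff_uniform /diff_count => hmax.
have hN a : a != 0 -> (#|sol a 0%R| <= d)%N.
  move=> a0; rewrite -hmax.
  have := @leq_bigmax_cond F (fun a => a != 0) (fun a => (\max_b #|sol a b|)%N) a a0; apply: leq_trans.
  exact: (@leq_bigmax_cond F predT (fun b => #|sol a b|) 0%R isT).
have solS a : a != 0 -> sol a 0 = S a.
  move=> a0; apply/eqP; rewrite eq_sym eqEcard Ssub // cardS //.
  exact: hN.
have inS a x : a != 0 -> x \in sol a 0 -> exists2 z, z \in mu1 & x = a / (z - 1).
  move=> a0; rewrite solS // => /imsetP [z hz ->]; by exists z.
have fib0 z : g z = g 0 -> z = 0.
  move=> hz; apply/eqP; apply/negP => /negP z0.
  have : 0 \in sol z 0 by rewrite inE add0r hz subrr.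
  case/(inS _ _ z0) => u; rewrite !inE => /andP [u1 _] /esym /eqP.
  by rewrite mulf_eq0 invr_eq0 subr_eq0 (negbTE z0) (negbTE u1).
exists (g 0); split.
- rewrite /npreim (_ : [set x | g x == g 0] = [set 0]) ?cards1 //.
  by apply/setP => z; rewrite !inE; apply/eqP/eqP => [/fib0|->].
- move=> y /eqP/cards1P [x hx].
  have : x \in [set x0 | g x0 == y] by rewrite hx set11.
  rewrite inE => /eqP gx; rewrite -gx.
  have [->|x0] := eqVneq x 0; first by [].
  have : w * x \in [set x0 | g x0 == y] by rewrite inE hkd ?gx ?(prim_expr_order hw).
  by rewrite hx inE (negbTE (wx_neq x0)).
- move=> y [x <-] ne.
  have x0 : x != 0 by apply: contraNneq ne => ->.
  rewrite /npreim -(card_fib_mu x0).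
  suff -> : [set z | g z == g x] = [set z * x | z in mu] by [].
  apply/eqP; rewrite eq_sym eqEcard fib_mu //=.
  apply: subset_leq_card; apply/subsetP => z; rewrite inE => /eqP gz.
  have [->|zx] := eqVneq z x.
    by apply/imsetP; exists 1; rewrite ?inE ?expr1n ?mul1r.
  have a0 : z - x != 0 by rewrite subr_eq0.
  have e0 : x + (z - x) = z by rewrite addrC subrK.
  have : x \in sol (z - x) 0 by rewrite inE e0 gz subrr.
  case/(inS _ _ a0) => u; rewrite !inE => /andP [u1 uk] hxu.
  apply/imsetP; exists u; rewrite ?inE //.
  have u10 : u - 1 != 0 by rewrite subr_eq0.
  have e : x * (u - 1) = z - x by rewrite {1}hxu mulfVK.
  apply: (etrans (esym e0)); rewrite -e; ring.
Qed.


Lemma dir2 : almost_k_to_1 d.+1 g -> diff_uniform g d.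
Proof.
case=> y0 [h1 huniq hk].
have [x0 fx0] : exists x0, [set x | g x == y0] = [set x0].
  by apply/cards1P; rewrite -/(npreim g y0) h1.
have gx0 : g x0 = y0.
  have : x0 \in [set x0] by rewrite set11.
  by rewrite -fx0 inE => /eqP.
have x00 : x0 = 0.
  apply/eqP; apply/negP => /negP nz.
  have : w * x0 \in [set x | g x == y0] by rewrite inE hkd ?gx0 ?(prim_expr_order hw).
  by rewrite fx0 inE (negbTE (wx_neq nz)).
subst x0.
have fib0 z : g z = g 0 -> z = 0.
  by move=> hz; apply/set1P; rewrite -fx0 inE hz gx0.
have fibx x : x != 0 -> [set z | g z == g x] = [set z * x | z in mu].
  move=> nz; apply/eqP; rewrite eq_sym eqEcard fib_mu // card_fib_mu //=.
  rewrite -/(npreim g (g x)) (hk (g x)) //; first by exists x.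
  by apply: contra nz => /eqP; rewrite -gx0 => /fib0 ->.
have solS a : a != 0 -> sol a 0 = S a.
  move=> a0; apply/eqP; rewrite eqEcard (subset_leq_card (Ssub a0)) andbT.
  apply/subsetP => x; rewrite inE => /eqP e.
  have nx : x != 0.
    apply: contra a0 => /eqP x0; subst x; move: e; rewrite add0r => /eqP.
    by rewrite subr_eq0 => /eqP /fib0 ->.
  have : x + a \in [set z | g z == g x] by rewrite inE; apply/eqP; apply/eqP; rewrite -subr_eq0 e.
  rewrite fibx // => /imsetP [u]; rewrite inE => uk hu.
  have u1 : u != 1.
    apply: contra a0 => /eqP u1; move: hu; rewrite u1 mul1r => /eqP.
    by rewrite -subr_eq0 addrC addKr => ->.
  have u10 : u - 1 != 0 by rewrite subr_eq0.
  apply/imsetP; exists u; first by rewrite !inE u1.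
  apply: (mulIf u10); rewrite mulfVK //.
  by rewrite mulrBr mulr1 mulrC -hu addrC addKr.
have cardsol a : a != 0 -> #|sol a 0| = d by move=> a0; rewrite solS // cardS.
rewrite /diff_uniform /diff_count; apply/eqP; rewrite eqn_leq; apply/andP; split.
  apply/bigmax_leqP => a a0; apply/bigmax_leqP => b _.
  change (#|sol a b| <= d)%N; case: (set_0Vmem (sol a b)) => [->|[x hx]]; first by rewrite cards0.
  have : a / (w - 1) \in sol a 0.
    apply: (subsetP (Ssub a0)); apply/imsetP; exists w => //.
    by rewrite !inE w_neq1 /=; apply/eqP; exact: (prim_expr_order hw).
  move/(trans_sol hx); rewrite cardsol //.
have o0 : (1 : F) != 0 by exact: oner_neq0.
apply: leq_trans _ (@leq_bigmax_cond F (fun a => a != 0) (fun a => (\max_b #|sol a b|)%N) 1 o0).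
rewrite -(cardsol 1 o0).
exact: (@leq_bigmax_cond F predT (fun b => #|sol 1 b|) 0%R isT).
Qed.

End Main.
End S.

Theorem theorem3p3 (p n : nat) (F : finFieldType) (d : nat)
  (hp : prime p) (hcard : #|F| = (p ^ n)%N)
  (hdiv : (d.+1 %| p ^ n - 1)%N)
  (f : {poly F})
  (hDO : DO_poly p n f)
  (hk : k_divisible d.+1 (fun x => f.[x])) :
  diff_uniform (fun x => f.[x]) d <-> almost_k_to_1 d.+1 (fun x => f.[x]).
Proof.
set g := fun x => f.[x].
have hE : forall x y a : F,
  g (x+y+a) - g (x+y) - g (x+a) + g x - g (y+a) + g y + g a - g 0 = 0.
  by move=> x y a; exact: (DO_E3 hp hcard hDO x y a).
have hkd : forall z x : F, z ^+ d.+1 = 1 -> g (z * x) = g x.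
  case: hk => f' hf' z x zk; rewrite /g !hf' exprMn zk mul1r.
  by rewrite -hf'.
case: d hdiv hk hkd => [|d] hdiv hk hkd.
  split.
  - rewrite /diff_uniform => h.
    have o0 : (1 : F) != 0 by exact: oner_neq0.
    have := @leq_bigmax_cond F (fun a => a != 0)
      (fun a => (\max_b diff_count g a b)%N) 1 o0.
    rewrite h => h2.
    have := leq_trans (@leq_bigmax_cond F predT (fun b => diff_count g 1 b)
       (g (0 + 1) - g 0) isT) h2.
    rewrite leqn0 /diff_count cards_eq0 => /eqP e.
    have : (0 : F) \in [set x | g (x + 1) - g x == g (0 + 1) - g 0] by rewrite inE.
    by rewrite e inE.
  - case=> y0 [h1 hu hk1].
    have [x0 fx0] : exists x0, [set x | g x == y0] = [set x0].
      by apply/cards1P; rewrite -/(npreim g y0) h1.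
    have nx : x0 + 1 != x0.
      by rewrite -subr_eq0 addrC addKr oner_neq0.
    have [ey|ney] := eqVneq (g (x0 + 1)) y0.
      have : x0 + 1 \in [set x | g x == y0] by rewrite inE ey.
      by rewrite fx0 inE (negbTE nx).
    have := hk1 (g (x0 + 1)) (ex_intro _ _ erefl) ney.
    by move/hu; move/eqP: ney.
have [w hw] : exists w : F, d.+2.-primitive_root w.
  apply: prim_root_ex => //; by rewrite hcard -subn1.
split; [exact: (dir1 hkd hw (ltn0Sn d)) | exact: (dir2 hE hkd hw (ltn0Sn d))].
Qed.
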